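(* Let $R$ be a commutative ring with identity and $S$ a multiplicative subset of $R$. Let $M$ and $N$ be $R$-modules and suppose $f:M\rightarrow N$ is a $u$-$S$-isomorphism. Then there exist a $u$-$S$-isomorphism $g:N\rightarrow M$ and an element $t\in S$ such that $f\circ g=t\,\mathrm{Id}_N$ and $g\circ f=t\,\mathrm{Id}_M$.
   Context: A multiplicative subset $S$ of $R$ satisfies $1\in S$ and $s_1s_2\in S$ for $s_1,s_2\in S$. An $R$-module $T$ is $u$-$S$-torsion (with respect to $s$) if there is $s\in S$ with $sT=0$. A sequence $A\xrightarrow{f}B\xrightarrow{g}C$ is $u$-$S$-exact at $B$ (with respect to $s\in S$) if $s\,\mathrm{Ker}(g)\subseteq \mathrm{Im}(f)$ and $s\,\mathrm{Im}(f)\subseteq\mathrm{Ker}(g)$. An $R$-homomorphism $f:M\to N$ is a $u$-$S$-isomorphism if $0\to M\xrightarrow{f}N\to 0$ is $u$-$S$-exact, i.e. there is $s\in S$ with $s\,\mathrm{Ker}(f)=0$ and $sN\subseteq \mathrm{Im}(f)$. *)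

(* Defs.v *)
From HB Require Import structures.
From mathcomp Require Import all_boot all_algebra.
Set Implicit Arguments. Unset Strict Implicit. Unset Printing Implicit Defensive.
Import GRing.Theory.
Local Open Scope ring_scope.

Definition mult_subset (R : comPzRingType) (S : R -> Prop) : Prop :=
  S 1 /\ (forall s1 s2, S s1 -> S s2 -> S (s1 * s2)).

Definition u_S_iso (R : comPzRingType) (S : R -> Prop)
  (M N : lmodType R) (f : M -> N) : Prop :=
  exists s, S s /\ (forall m : M, f m = 0 -> s *: m = 0)
              /\ (forall n : N, exists m : M, f m = s *: n).

(* Main.v *)
Require Import Defs.
From HB Require Import structures.
From mathcomp Require Import all_boot all_algebra.
Local Open Scope ring_scope.
Import GRing.Theory.

Section Build.
Variables (R : comPzRingType) (M N : lmodType R) (f : {linear M -> N}) (s : R).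
Hypothesis Hk : forall m : M, f m = 0 -> s *: m = 0.
Hypothesis Hi : forall n : N, exists m : M, f m == s *: n.

Definition gfun (n : N) : M := s *: xchoose (Hi n).

Lemma gfun_spec n : f (xchoose (Hi n)) = s *: n.
Proof. exact: eqP (xchooseP (Hi n)). Qed.

Lemma ker_eq m m' : f m = f m' -> s *: m = s *: m'.
Proof.
move=> E; apply/eqP; rewrite -subr_eq0 -scalerBr; apply/eqP/Hk.
by rewrite linearB E subrr.
Qed.

Lemma gfun_lin : linear gfun.
Proof.
move=> a x y; rewrite /gfun.
have -> : s *: xchoose (Hi (a *: x + y)) = s *: (a *: xchoose (Hi x) + xchoose (Hi y)).
  apply: ker_eq; rewrite gfun_spec linearD linearZ /=.
  rewrite linearP (gfun_spec x) (gfun_spec y).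
  by rewrite !scalerA mulrC.
by rewrite scalerDr !scalerA mulrC.
Qed.

HB.instance Definition _ := GRing.isLinear.Build R N M _ gfun gfun_lin.

Definition glin : {linear N -> M} := gfun : {linear N -> M}.

Lemma fg n : f (gfun n) = (s * s) *: n.
Proof. by rewrite /gfun linearZ /= gfun_spec scalerA. Qed.

Lemma gf m : gfun (f m) = (s * s) *: m.
Proof.
rewrite /gfun -scalerA; apply: ker_eq.
by rewrite gfun_spec linearZ.
Qed.
End Build.

Theorem proposition1p1 (R : comPzRingType) (S : R -> Prop)
  (M N : lmodType R) (f : {linear M -> N}) :
  mult_subset S -> u_S_iso S f ->
  exists g : {linear N -> M},
    u_S_iso S g /\
    exists t, S t /\ (forall n : N, f (g n) = t *: n)
                  /\ (forall m : M, g (f m) = t *: m).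
Proof.
move=> [S1 SM] [s [Ss [Hk Hi]]].
have Hi' : forall n : N, exists m : M, f m == s *: n.
  by move=> n; have [m Em] := Hi n; exists m; apply/eqP.
exists (@glin _ _ _ f s Hk Hi'); split.
  exists (s * s); split; first exact: SM.
  split.
    by move=> n E; rewrite -(@fg _ _ _ f s Hi') /= E linear0.
  by move=> m; exists (f m); exact: (@gf _ _ _ f s Hk Hi').
exists (s * s); split; first exact: SM.
split; [exact: (@fg _ _ _ f s Hi') | exact: (@gf _ _ _ f s Hk Hi')].
Qed.
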